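(* Let $\mathcal X=\{1,\dots,N\}$ with $N\ge 2$, let $0<\alpha<1$ and $0\le\varepsilon\le 1-\frac1N$. Let $p,q$ be probability distributions on $\mathcal X$ with $p(x)>0$ for all $x\in\mathcal X$, and let $y\in\mathcal X$. Put $p_0'=U_{\alpha,0}(p,y)$ and $p_\varepsilon'=U_{\alpha,\varepsilon}(p,y)$. Then \[ D(q\parallel p_0')\;\ge\; D(q\parallel p_\varepsilon')-\log\frac1{1-\varepsilon}. \]
   Context: All logarithms are natural. For a distribution $p$ on $\mathcal X$, a letter $y\in\mathcal X$, $0<\alpha<1$ and $0\le\varepsilon\le 1-\frac1N$, the update $U_{\alpha,\varepsilon}(p,y)$ is the distribution $p'$ with $p'(x)=\alpha p(x)+(1-\alpha)(1-\varepsilon)$ if $x=y$ and $p'(x)=\alpha p(x)+(1-\alpha)\frac{\varepsilon}{N-1}$ if $x\ne y$. For distributions $q,r$ on $\mathcal X$ with $r(x)>0$ for all $x$, the KL divergence is $D(q\parallel r)=\sum_{x:\,q(x)>0} q(x)\log\frac{q(x)}{r(x)}$. *)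

(* Defs.v *)
From mathcomp Require Import all_boot all_order all_algebra.
From mathcomp Require Import all_classical all_reals all_analysis.
Set Implicit Arguments. Unset Strict Implicit. Unset Printing Implicit Defensive.
Import Order.TTheory GRing.Theory Num.Theory.
Local Open Scope ring_scope.

(* The alphabet X = {1,...,N} is represented by 'I_N. *)
Definition is_distr (R : realType) (N : nat) (p : 'I_N -> R) : Prop :=
  (forall x, 0 <= p x) /\ \sum_(x < N) p x = 1.

Definition update (R : realType) (N : nat) (alpha eps : R) (p : 'I_N -> R)
  (y : 'I_N) : 'I_N -> R :=
  fun x => if x == y then alpha * p x + (1 - alpha) * (1 - eps)
           else alpha * p x + (1 - alpha) * (eps / (N%:R - 1)).

Definition KL (R : realType) (N : nat) (q r : 'I_N -> R) : R :=
  \sum_(x < N | 0 < q x) q x * ln (q x / r x).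

(* Main.v *)
Require Import Defs.
From mathcomp Require Import all_boot all_order all_algebra.
From mathcomp Require Import all_classical all_reals all_analysis.
From mathcomp Require Import lra.
Import Order.TTheory GRing.Theory Num.Theory.
Local Open Scope ring_scope.

Theorem lemma1 (R : realType) (N : nat) (alpha eps : R) (p q : 'I_N -> R)
  (y : 'I_N) :
  (2 <= N)%N ->
  0 < alpha -> alpha < 1 ->
  0 <= eps -> eps <= 1 - 1 / N%:R ->
  is_distr p -> is_distr q ->
  (forall x, 0 < p x) ->
  KL q (update alpha 0 p y) >=
    KL q (update alpha eps p y) - ln (1 / (1 - eps)).
Proof.
move=> HN a0 a1 e0 e1 [p0 psum] [q0 qsum] ppos.
have N1 : 1 < (N%:R : R) by rewrite (ltr_nat R 1 N).
have Ninv : 0 < 1 / (N%:R : R) by rewrite divr_gt0 //; lra.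
have eps1 : 0 < 1 - eps by lra.
have ed : 0 <= eps / (N%:R - 1) by rewrite divr_ge0 //; lra.
set r0 := update alpha 0 p y.
set re := update alpha eps p y.
have r0pos : forall x, 0 < r0 x.
  move=> x; rewrite /r0 /update; case: ifP => _; have := ppos x; nra.
have repos : forall x, 0 < re x.
  move=> x; rewrite /re /update; case: ifP => _; have := ppos x; nra.
have rle : forall x, (1 - eps) * r0 x <= re x.
  move=> x; have h := mulr_ge0 e0 (ltW (mulr_gt0 a0 (ppos x))).
  have h' : 0 <= (1 - alpha) * (eps / (N%:R - 1)) by rewrite mulr_ge0 //; lra.
  rewrite /r0 /re /update; case: ifP => _; rewrite ?mul0r ?subr0 ?mulr0 ?addr0; nra.
have key : forall x, 0 < q x ->
   q x * ln (q x / re x) + q x * ln (1 - eps) <= q x * ln (q x / r0 x).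
  move=> x qx; rewrite -mulrDr ler_pM2l //.
  have h1 : q x / re x \is Num.pos by rewrite posrE divr_gt0.
  have h2 : (1 - eps) \is Num.pos by rewrite posrE.
  rewrite -lnM // ler_ln ?posrE ?mulr_gt0 ?divr_gt0 //.
  rewrite mulrAC ler_pdivrMr // mulrAC ler_pdivlMr // -mulrA ler_pM2l //.
  1,2: by rewrite invr_gt0.
have hln : ln (1 / (1 - eps)) = - ln (1 - eps).
  by rewrite div1r lnV // posrE.
have qs : \sum_(x < N | 0 < q x) q x = 1.
  rewrite -qsum [X in _ = X](bigID (fun x => 0 < q x)) /=.
  have -> : \sum_(i < N | ~~ (0 < q i)) q i = 0.
    apply: big1 => i hi; apply/eqP; rewrite eq_le q0 andbT.
    by rewrite leNgt.
  by rewrite addr0.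
rewrite hln opprK /KL. 
rewrite -[ln (1 - eps)]mul1r -{1}qs big_distrl /= -big_split /=.
by apply: ler_sum => x hx; exact: key.
Qed.
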